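(* Let $(\mathcal X,\mathcal B,\pi)$ be a measure space with $\pi$ $\sigma$-finite, $r:\mathcal X\to\mathbb R$ measurable, $\{\varepsilon(x)\}$ a real-valued random field with i.i.d. copies $\varepsilon_1,\dots,\varepsilon_K$, $K$ a finite integer $\ge2$, and $p\in\mathcal P_\pi$. Let $X_1,\dots,X_K$ be i.i.d. with density $p$, independent of the noise, and let $\widehat X=X_I$ be the Plackett–Luce curated sample. Then for every measurable $f$ with $\mathbb E_{X\sim p}|f(X)|<\infty$, $$\mathbb E[f(\widehat X)]=\mathbb E_{X\sim p}\bigl[f(X)H^K_p(X)\bigr].$$ Consequently, the density of $\widehat X$ w.r.t. $\pi$ is $pH^K_p$.
   Context: $\mathcal P_\pi$ = probability densities w.r.t. $\pi$. Plackett–Luce curation: with $\tilde w_k=e^{r(X_k)+\varepsilon_k(X_k)}$, the index $I\in\{1,\dots,K\}$ is drawn with $\mathbb P(I=k\mid X_{1:K},\varepsilon_{1:K})=\tilde w_k/\sum_{i=1}^K\tilde w_i$. The choice kernel is $H^K_p(x):=\mathbb E\bigl[K e^{r(x)+\varepsilon(x)}/(e^{r(x)+\varepsilon(x)}+\sum_{k=1}^{K-1}e^{r(X_k)+\varepsilon_k(X_k)})\bigr]$ with $X_1,\dots,X_{K-1}$ i.i.d. with density $p$ and $\varepsilon,\varepsilon_1,\dots,\varepsilon_{K-1}$ i.i.d. copies of the noise field, all independent. *)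

(* Defs.v *)
From HB Require Import structures.
From mathcomp Require Import all_boot all_order all_algebra.
From mathcomp Require Import all_classical all_reals all_analysis.
Set Implicit Arguments. Unset Strict Implicit. Unset Printing Implicit Defensive.
Import Order.TTheory GRing.Theory Num.Theory.
Local Open Scope ring_scope.
Local Open Scope classical_set_scope.

Section PL.
Context {R : realType} {dX dO : measure_display}
  {X : measurableType dX} {Omega : measurableType dO}.
Variables (pi : {measure set X -> \bar R}) (P : probability Omega R)
  (p : X -> R) (r : X -> R) (eps : Omega -> X -> R).

Definition pl_weight (t : X * Omega) : R := expR (r t.1 + eps t.2 t.1).

(* One i.i.d. draw (X, eps) with X of density p w.r.t. pi and the noise
   field eps(omega, .) with omega ~ P, independent of X. *)
Definition draw_int (F : X * Omega -> \bar R) : \bar R :=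
  (\int[pi]_x ((p x)%:E * \int[P]_w F (x, w)))%E.

(* Expectation over n i.i.d. draws (X_1,eps_1),...,(X_n,eps_n), written as
   the iterated integral (Fubini) over the n-fold product law. *)
Fixpoint iid_int (n : nat) (F : seq (X * Omega) -> \bar R) : \bar R :=
  match n with
  | 0 => F [::]
  | n.+1 => draw_int (fun t => iid_int n (fun s => F (t :: s)))
  end.

(* Conditional expectation of f(X_I) given the draws, where
   P(I = k | X_{1:K}, eps_{1:K}) = w_k / sum_i w_i. *)
Definition curated_cond (f : X -> R) (s : seq (X * Omega)) : R :=
  \sum_(t <- s) (pl_weight t / (\sum_(u <- s) pl_weight u) * f t.1).

Definition curated_expect (K : nat) (f : X -> R) : \bar R :=
  iid_int K (fun s => (curated_cond f s)%:E).

Definition choice_kernel (K : nat) (x : X) : \bar R :=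
  (\int[P]_w iid_int K.-1 (fun s =>
     ((K%:R * expR (r x + eps w x)) /
      (expR (r x + eps w x) + \sum_(t <- s) pl_weight t))%:E))%E.

End PL.

(* Main.v *)
Require Import Defs.
From HB Require Import structures.
From mathcomp Require Import all_boot all_order all_algebra.
From mathcomp Require Import all_classical all_reals all_analysis.
From mathcomp Require Import measurable_realfun.
From mathcomp Require Import ring lra.
Import Order.TTheory GRing.Theory Num.Theory.
Local Open Scope ring_scope.
Local Open Scope classical_set_scope.

Lemma measurable_inv (R : realType) : measurable_fun [set: R] (@GRing.inv R).
Proof.
have -> : [set: R] = [set 0] `|` [set x | x != 0].
  by apply/seteqP; split => x //= _; case: (eqVneq x 0) => [->|]; [left|right].
have m1 : measurable [set x : R | x != 0].
  rewrite (_ : [set x : R | x != 0] = ~` [set 0]); first exact: measurableC.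
  by apply/seteqP; split => x /=; move/eqP.
apply/measurable_funU => //.
split.
  move=> _ B mB; have [B0|B0] := pselect (B 0^-1).
    rewrite (_ : [set 0] `&` _ = [set 0]) //; apply/seteqP; split => x /=.
      by case=> ->.
    by move=> ->; split.
  rewrite (_ : [set 0] `&` _ = set0) //; apply/seteqP; split => x //= [-> ?]; exact: B0.
apply: open_continuous_measurable_fun.
  exact: open_neq.
by move=> x /set_mem /= x0; apply: inv_continuous.
Qed.

Section S.
Context {R : realType} {dX dO : measure_display}
  {X : measurableType dX} {Omega : measurableType dO}.
Variables (pi : {measure set X -> \bar R}) (P : probability Omega R)
  (p r : X -> R) (eps : Omega -> X -> R).
Hypotheses (hpi : sigma_finite setT pi) (mr : measurable_fun setT r)
  (meps : measurable_fun setT (fun z : Omega * X => eps z.1 z.2))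
  (mp : measurable_fun setT p) (p0 : forall x, 0 <= p x).
Variable f : X -> R.
Hypothesis mf : measurable_fun setT f.

Local Notation T := (X * Omega)%type.
Local Notation w := (pl_weight r eps).
Local Notation draw := (draw_int pi P p).
Local Notation iid := (iid_int pi P p).

Definition pis := (pi : set X -> \bar R).
HB.instance Definition _ := Measure.on pis.
HB.instance Definition _ := Measure_isSigmaFinite.Build _ _ _ pis hpi.

Let nu_sf : sigma_finite setT (pis \x P)%E.
Proof.
have /sigma_finiteP[F [TF ndF Foo]] := sigma_finiteT pis.
have /sigma_finiteP[G [TG ndG Goo]] := sigma_finiteT P.
exists (fun n => F n `*` G n).
 rewrite -setXTT TF TG predeqE => -[x y]; split.
    move=> [/= [n _ Fnx] [k _ Gky]]; exists (maxn n k) => //; split.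
    - by move: x Fnx; exact/subsetPset/ndF/leq_maxl.
    - by move: y Gky; exact/subsetPset/ndG/leq_maxr.
  by move=> [n _ []/= ? ?]; split; exists n.
move=> k; have [? ?] := Foo k; have [? ?] := Goo k.
split; first exact: measurableX.
by rewrite product_measure1E// lte_mul_pinfty// ge0_fin_numE.
Qed.

Definition nu := (pis \x P)%E.
HB.instance Definition _ := Measure.on nu.
HB.instance Definition _ := Measure_isSigmaFinite.Build _ _ _ nu nu_sf.

Lemma mw : measurable_fun setT w.
Proof.
rewrite /pl_weight; apply: measurableT_comp; first exact: measurable_expR.
apply: measurable_funD; first exact: measurableT_comp.
exact: (measurableT_comp meps (measurable_fun_pair measurable_snd measurable_fst)).
Qed.

Lemma w_gt0 t : 0 < w t.
Proof. exact: expR_gt0. Qed.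

Lemma iid_ge0 n (F : seq T -> \bar R) : (forall s, (0 <= F s)%E) -> (0 <= iid n F)%E.
Proof.
elim: n F => [|n IH] F F0 //=.
apply: integral_ge0 => x _; apply: mule_ge0; first by rewrite lee_fin.
by apply: integral_ge0 => y _; apply: IH.
Qed.

Lemma draw_ge0 (G : T -> \bar R) : (forall t, (0 <= G t)%E) -> (0 <= draw G)%E.
Proof.
move=> G0; apply: integral_ge0 => x _; apply: mule_ge0; first by rewrite lee_fin.
by apply: integral_ge0.
Qed.

Lemma draw_nu (G : T -> \bar R) : measurable_fun setT G -> (forall t, (0 <= G t)%E) ->
  draw G = (\int[nu]_t ((p t.1)%:E * G t))%E.
Proof.
move=> mG G0; rewrite /nu.
rewrite (fubini_tonelli1 (fun t : T => ((p t.1)%:E * G t)%E)); last 2 first.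
- apply: emeasurable_funM; last exact: mG.
  by apply/measurable_EFinP; exact: measurableT_comp.
- by move=> t; apply: mule_ge0; [rewrite lee_fin|].
apply: eq_integral => x _ /=; rewrite /fubini_F /=.
rewrite ge0_integralZl_EFin //.
all: first [exact: (measurableT_comp mG (pair1_measurable x)) | by move=> y _; apply: G0].
Qed.

Local Open Scope ereal_scope.

Lemma mpE : measurable_fun setT (fun t : T => (p t.1)%:E).
Proof. by apply/measurable_EFinP; exact: measurableT_comp. Qed.

Lemma draw_meas d (Z : measurableType d) (G : Z * T -> \bar R) :
  measurable_fun setT G -> (forall y, 0 <= G y) ->
  measurable_fun setT (fun z => draw (fun t => G (z, t))).
Proof.
move=> mG G0.
have -> : (fun z => draw (fun t => G (z, t))) =
    (fun z => \int[nu]_t ((p t.1)%:E * G (z, t))).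
  apply/funext => z; apply: draw_nu; last by move=> t; exact: G0.
  exact: (measurableT_comp mG (pair1_measurable z)).
apply: (measurable_fun_fubini_tonelli_F (fun zt : Z * T => (p zt.2.1)%:E * G zt)).
  apply: emeasurable_funM => //.
  apply/measurable_EFinP; apply: measurableT_comp => //.
  exact: measurableT_comp.
by move=> y; apply: mule_ge0; [rewrite lee_fin|exact: G0].
Qed.

Lemma draw_add (A B : T -> \bar R) :
  measurable_fun setT A -> (forall t, 0 <= A t) ->
  measurable_fun setT B -> (forall t, 0 <= B t) ->
  draw (fun t => A t + B t) = draw A + draw B.
Proof.
move=> mA A0 mB B0.
rewrite !draw_nu //; last 2 first.
- exact: emeasurable_funD.
- by move=> t; apply: adde_ge0.
under eq_integral do rewrite ge0_muleDr //.
rewrite ge0_integralD //.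
- by move=> t _; apply: mule_ge0; [rewrite lee_fin|].
- exact: emeasurable_funM mpE mA.
- by move=> t _; apply: mule_ge0; [rewrite lee_fin|].
- exact: emeasurable_funM mpE mB.
Qed.

Lemma draw_scale (k : R) (A : T -> \bar R) : (0 <= k)%R ->
  measurable_fun setT A -> (forall t, 0 <= A t) ->
  draw (fun t => k%:E * A t) = k%:E * draw A.
Proof.
move=> k0 mA A0.
rewrite !draw_nu //; last 2 first.
- exact: measurable_funeM.
- by move=> t; apply: mule_ge0; [rewrite lee_fin|].
under eq_integral do rewrite muleCA.
rewrite ge0_integralZl_EFin //.
- by move=> t _; apply: mule_ge0; [rewrite lee_fin|].
- exact: emeasurable_funM mpE mA.
Qed.

Lemma draw_mono (A B : T -> \bar R) :
  measurable_fun setT A -> (forall t, 0 <= A t) ->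
  measurable_fun setT B -> (forall t, A t <= B t) ->
  draw A <= draw B.
Proof.
move=> mA A0 mB AB.
rewrite !draw_nu //; last by move=> t; exact: le_trans (AB t).
apply: ge0_le_integral => //.
- by move=> t _; apply: mule_ge0; [rewrite lee_fin|].
- exact: emeasurable_funM mpE mA.
- exact: emeasurable_funM mpE mB.
- by move=> t _; apply: lee_wpmul2l; [rewrite lee_fin|].
Qed.

Lemma draw_swap (F : T * T -> \bar R) :
  measurable_fun setT F -> (forall y, 0 <= F y) ->
  draw (fun t => draw (fun u => F (t, u))) = draw (fun u => draw (fun t => F (t, u))).
Proof.
move=> mF F0.
have mFs : measurable_fun setT (fun y : T * T => F (y.2, y.1)).
  exact: (measurableT_comp mF (measurable_fun_pair measurable_snd measurable_fst)).
rewrite draw_nu; last 2 first.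
- exact: draw_meas.
- by move=> t; apply: draw_ge0.
rewrite [RHS]draw_nu; last 2 first.
- exact: (@draw_meas _ _ (fun y : T * T => F (y.2, y.1))).
- by move=> t; apply: draw_ge0.
have E1 : forall t, (p t.1)%:E * draw (fun u => F (t, u)) =
    \int[nu]_u ((p t.1)%:E * ((p u.1)%:E * F (t, u))).
  move=> t; rewrite draw_nu; last 2 first.
  - exact: (measurableT_comp mF (pair1_measurable t)).
  - by [].
  rewrite ge0_integralZl_EFin //.
  - by move=> u _; apply: mule_ge0; [rewrite lee_fin|].
  - apply: emeasurable_funM mpE _.
    exact: (measurableT_comp mF (pair1_measurable t)).
have E2 : forall u, (p u.1)%:E * draw (fun t => F (t, u)) =
    \int[nu]_t ((p t.1)%:E * ((p u.1)%:E * F (t, u))).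
  move=> u; rewrite draw_nu; last 2 first.
  - exact: (measurableT_comp mF (pair2_measurable u)).
  - by [].
  rewrite -ge0_integralZl_EFin //.
  - by apply: eq_integral => t _; rewrite muleCA.
  - by move=> t _; apply: mule_ge0; [rewrite lee_fin|].
  - apply: emeasurable_funM mpE _.
    exact: (measurableT_comp mF (pair2_measurable u)).
under eq_integral do rewrite E1.
under [RHS]eq_integral do rewrite E2.
apply: (fubini_tonelli (fun y : T * T => (p y.1.1)%:E * ((p y.2.1)%:E * F y))).
- apply: emeasurable_funM; first exact: measurableT_comp mpE measurable_fst.
  apply: emeasurable_funM => //; exact: measurableT_comp mpE measurable_snd.
- by move=> y; apply: mule_ge0; [rewrite lee_fin|apply: mule_ge0; [rewrite lee_fin|]].
Qed.

Local Close Scope ereal_scope.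

Definition fp x := Num.max (f x) 0.
Definition fm x := Num.max (- f x) 0.
Local Notation V := ((R * R) * (R * R))%type.
Definition gam (t : T) : V :=
  ((w t * fp t.1, w t * fm t.1), (w t, `|f t.1|)).
Definition sums (s : seq T) : V :=
  ((\sum_(u <- s) (gam u).1.1, \sum_(u <- s) (gam u).1.2),
   (\sum_(u <- s) (gam u).2.1, \sum_(u <- s) (gam u).2.2)).
Definition vshift (t : T) (v : V) : V :=
  (((gam t).1.1 + v.1.1, (gam t).1.2 + v.1.2),
   ((gam t).2.1 + v.2.1, (gam t).2.2 + v.2.2)).

Lemma vshift21 t v : (vshift t v).2.1 = w t + v.2.1. Proof. by []. Qed.
Arguments vshift : simpl never.
Arguments gam : simpl never.
Arguments sums : simpl never.

Lemma sums_cons t s : sums (t :: s) = vshift t (sums s).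
Proof. by rewrite /sums /vshift !big_cons. Qed.

Lemma mfp : measurable_fun setT fp.
Proof. exact: measurable_maxr. Qed.
Lemma mfm : measurable_fun setT fm.
Proof. by apply: measurable_maxr => //; exact: measurableT_comp. Qed.

Lemma mgam : measurable_fun setT gam.
Proof.
have m1 : measurable_fun setT (fun t : T => t.1) by exact: measurable_fst.
apply: measurable_fun_pair; apply: measurable_fun_pair => /=.
- by apply: measurable_funM; [exact: mw|exact: measurableT_comp mfp m1].
- by apply: measurable_funM; [exact: mw|exact: measurableT_comp mfm m1].
- exact: mw.
- by apply: measurableT_comp => //; exact: measurableT_comp mf m1.
Qed.

Lemma mvshift : measurable_fun setT (fun y : T * V => vshift y.1 y.2).
Proof.
have mg : measurable_fun setT (fun y : T * V => gam y.1).
  exact: measurableT_comp mgam measurable_fst.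
have m11 : measurable_fun setT (fun y : T * V => y.2.1.1).
  by do 2 apply: measurableT_comp measurable_fst _; exact: measurable_snd.
have m12 : measurable_fun setT (fun y : T * V => y.2.1.2).
  by apply: measurableT_comp measurable_snd _; apply: measurableT_comp measurable_fst _; exact: measurable_snd.
have m21 : measurable_fun setT (fun y : T * V => y.2.2.1).
  by apply: measurableT_comp measurable_fst _; apply: measurableT_comp measurable_snd _; exact: measurable_snd.
have m22 : measurable_fun setT (fun y : T * V => y.2.2.2).
  by do 2 apply: measurableT_comp measurable_snd _; exact: measurable_snd.
rewrite /vshift; apply: measurable_fun_pair; apply: measurable_fun_pair.
- apply: measurable_funD => //.
  by apply: measurableT_comp measurable_fst _; exact: measurableT_comp measurable_fst mg.
- apply: measurable_funD => //.
  by apply: measurableT_comp measurable_snd _; exact: measurableT_comp measurable_fst mg.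
- apply: measurable_funD => //.
  by apply: measurableT_comp measurable_fst _; exact: measurableT_comp measurable_snd mg.
- apply: measurable_funD => //.
  by apply: measurableT_comp measurable_snd _; exact: measurableT_comp measurable_snd mg.
Qed.

Local Open Scope ereal_scope.

Definition Fz d (Z : measurableType d) (Phi : Z * V -> \bar R) (z : Z) (s : seq T) :=
  Phi (z, sums s).
Definition shiftP d (Z : measurableType d) (Phi : Z * V -> \bar R) : (Z * T) * V -> \bar R :=
  fun y => Phi (y.1.1, vshift y.1.2 y.2).

Arguments Fz {d Z}.
Arguments shiftP {d Z}.

Lemma Fz_cons d (Z : measurableType d) (Phi : Z * V -> \bar R) z t :
  (fun s => Fz Phi z (t :: s)) = Fz (shiftP Phi) (z, t).
Proof. by apply/funext => s; rewrite /Fz /shiftP sums_cons. Qed.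

Lemma mshiftP d (Z : measurableType d) (Phi : Z * V -> \bar R) :
  measurable_fun setT Phi -> measurable_fun setT (shiftP Phi).
Proof.
move=> mP; apply: measurableT_comp mP _; apply: measurable_fun_pair.
  by apply: measurableT_comp measurable_fst _; exact: measurable_fst.
have mg : measurable_fun setT (fun y : (Z * T) * V => (y.1.2, y.2)).
  apply: measurable_fun_pair => //.
  exact: measurableT_comp measurable_snd measurable_fst.
exact: (measurableT_comp mvshift mg).
Qed.

Arguments mshiftP {d Z Phi}.

Lemma iidS n F : iid n.+1 F = draw (fun t => iid n (fun s => F (t :: s))).
Proof. by []. Qed.

Lemma iidS_Fz n d (Z : measurableType d) (Phi : Z * V -> \bar R) z :
  iid n.+1 (Fz Phi z) = draw (fun t => iid n (Fz (shiftP Phi) (z, t))).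
Proof. by rewrite iidS; congr draw; apply/funext => t; rewrite Fz_cons. Qed.

Lemma iid_meas n : forall d (Z : measurableType d) (Phi : Z * V -> \bar R),
  measurable_fun setT Phi -> (forall y, 0 <= Phi y) ->
  measurable_fun setT (fun z => iid n (Fz Phi z)).
Proof.
elim: n => [|n IH] d Z Phi mP P0.
  exact: (measurableT_comp mP (pair2_measurable (sums [::]))).
have -> : (fun z => iid n.+1 (Fz Phi z)) =
    (fun z => draw (fun t => iid n (Fz (shiftP Phi) (z, t)))).
  by apply/funext => z; rewrite iidS; congr draw; apply/funext => t; rewrite Fz_cons.
apply: (@draw_meas _ _ (fun zt => iid n (Fz (shiftP Phi) zt))).
  by apply: IH; [exact: mshiftP|move=> y; exact: P0].
by move=> y; apply: iid_ge0 => s; exact: P0.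
Qed.

Arguments iid_meas n {d Z Phi}.

Lemma iid_measT n d (Z : measurableType d) (Phi : Z * V -> \bar R) z :
  measurable_fun setT Phi -> (forall y, 0 <= Phi y) ->
  measurable_fun setT (fun t => iid n (Fz (shiftP Phi) (z, t))).
Proof.
move=> mP P0; have P0' : forall y, 0 <= shiftP Phi y by move=> y; exact: P0.
exact: (measurableT_comp (iid_meas n (mshiftP mP) P0') (pair1_measurable z)).
Qed.

Lemma iid_add n : forall d (Z : measurableType d) (Phi1 Phi2 : Z * V -> \bar R),
  measurable_fun setT Phi1 -> (forall y, 0 <= Phi1 y) ->
  measurable_fun setT Phi2 -> (forall y, 0 <= Phi2 y) -> forall z,
  iid n (fun s => Fz Phi1 z s + Fz Phi2 z s) = iid n (Fz Phi1 z) + iid n (Fz Phi2 z).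
Proof.
elim: n => [|n IH] d Z Phi1 Phi2 m1 P1 m2 P2 z; first by [].
rewrite iidS !iidS_Fz.
have -> : (fun t => iid n (fun s => Fz Phi1 z (t :: s) + Fz Phi2 z (t :: s))) =
    (fun t => iid n (Fz (shiftP Phi1) (z, t)) + iid n (Fz (shiftP Phi2) (z, t))).
  apply/funext => t; rewrite -IH; [|exact: mshiftP|by move=> ?; exact: P1|exact: mshiftP|by move=> ?; exact: P2].
  by congr (iid n _); apply/funext => s; rewrite /Fz /shiftP sums_cons.
rewrite draw_add //.
- exact: iid_measT.
- by move=> t; apply: iid_ge0 => s; exact: P1.
- exact: iid_measT.
- by move=> t; apply: iid_ge0 => s; exact: P2.
Qed.

Lemma iid_scale n : forall d (Z : measurableType d) (Phi : Z * V -> \bar R),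
  measurable_fun setT Phi -> (forall y, 0 <= Phi y) -> forall (k : R) z, (0 <= k)%R ->
  iid n (fun s => k%:E * Fz Phi z s) = k%:E * iid n (Fz Phi z).
Proof.
elim: n => [|n IH] d Z Phi mP P0 k z k0; first by [].
rewrite iidS !iidS_Fz.
have -> : (fun t => iid n (fun s => k%:E * Fz Phi z (t :: s))) =
    (fun t => k%:E * iid n (Fz (shiftP Phi) (z, t))).
  apply/funext => t; rewrite -IH //; [|exact: mshiftP|by move=> ?; exact: P0].
  by congr (iid n _); apply/funext => s; rewrite /Fz /shiftP sums_cons.
rewrite draw_scale //.
- exact: iid_measT.
- by move=> t; apply: iid_ge0 => s; exact: P0.
Qed.

Lemma iid_mono n : forall d (Z : measurableType d) (Phi Psi : Z * V -> \bar R),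
  measurable_fun setT Phi -> (forall y, 0 <= Phi y) ->
  measurable_fun setT Psi -> (forall y, 0 <= Psi y) ->
  (forall z s, Fz Phi z s <= Fz Psi z s) -> forall z,
  iid n (Fz Phi z) <= iid n (Fz Psi z).
Proof.
elim: n => [|n IH] d Z Phi Psi m1 P1 m2 P2 le12 z; first exact: le12.
rewrite !iidS_Fz.
apply: draw_mono.
- exact: iid_measT.
- by move=> t; apply: iid_ge0 => s; exact: P1.
- exact: iid_measT.
- move=> t; apply: IH; [exact: mshiftP|by move=> ?; exact: P1|exact: mshiftP|by move=> ?; exact: P2|].
  by move=> [z' t'] s; rewrite /Fz /shiftP /= -sums_cons; exact: le12.
Qed.

Local Close Scope ereal_scope.

Definition pos (x : R) := Num.max x 0.
Lemma pos_ge0 x : 0 <= pos x. Proof. by rewrite /pos le_max lexx orbT. Qed.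
Lemma posE x : 0 <= x -> pos x = x. Proof. by move=> x0; rewrite /pos max_l. Qed.

Lemma mposE d (Z : measurableType d) (h : Z -> R) :
  measurable_fun setT h -> measurable_fun setT (fun z => (pos (h z))%:E).
Proof.
move=> mh; apply/measurable_EFinP.
exact: (@measurable_maxr _ _ _ _ h (fun _ => 0) mh (measurable_cst _)).
Qed.

Lemma mdiv d (Z : measurableType d) (a b : Z -> R) :
  measurable_fun setT a -> measurable_fun setT b -> measurable_fun setT (fun z => a z / b z).
Proof.
move=> ma mb; apply: measurable_funM => //.
exact: (measurableT_comp (@measurable_inv R) mb).
Qed.

Lemma sums21_ge0 s : 0 <= (sums s).2.1.
Proof. by apply: sumr_ge0 => u _; exact/ltW/w_gt0. Qed.

Lemma fp_ge0 x : 0 <= fp x. Proof. by rewrite /fp le_max lexx orbT. Qed.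
Lemma fm_ge0 x : 0 <= fm x. Proof. by rewrite /fm le_max lexx orbT. Qed.

Lemma sums11_ge0 s : 0 <= (sums s).1.1.
Proof. by apply: sumr_ge0 => u _; apply: mulr_ge0; [exact/ltW/w_gt0|exact: fp_ge0]. Qed.
Lemma sums12_ge0 s : 0 <= (sums s).1.2.
Proof. by apply: sumr_ge0 => u _; apply: mulr_ge0; [exact/ltW/w_gt0|exact: fm_ge0]. Qed.

Section Claim.
Variables (g : X -> R) (sel : V -> R).
Hypotheses (mg : measurable_fun setT g) (g0 : forall x, 0 <= g x)
  (msel : measurable_fun setT sel)
  (hsel : forall t v, sel (vshift t v) = w t * g t.1 + sel v)
  (hsel0 : sel (sums [::]) = 0) (hselge0 : forall s, 0 <= sel (sums s)).

Definition PhiL (y : R * V) : \bar R := (pos (sel y.2 / (y.1 + y.2.2.1)))%:E.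
Definition PhiK (y : (R * T) * V) : \bar R := (pos (w y.1.2 / (y.1.1 + w y.1.2 + y.2.2.1)))%:E.
Definition PhiA (y : (R * T) * V) : \bar R := ((g y.1.2.1)%:E * PhiK y)%E.
Definition PhiB (y : (R * T) * V) : \bar R := PhiL (y.1.1 + w y.1.2, y.2).
Definition PhiQ (y : (R * (T * T)) * V) : \bar R := PhiK ((y.1.1 + w y.1.2.1, y.1.2.2), y.2).

Lemma m221 d (Z : measurableType d) : measurable_fun setT (fun y : Z * V => y.2.2.1).
Proof. exact: (measurableT_comp measurable_fst (measurableT_comp measurable_snd measurable_snd)). Qed.

Lemma mPhiL : measurable_fun setT PhiL.
Proof.
apply: mposE; apply: mdiv.
  exact: (measurableT_comp msel measurable_snd).
by apply: measurable_funD; [exact: measurable_fst|exact: m221].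
Qed.

Lemma mPhiK : measurable_fun setT PhiK.
Proof.
have mw2 : measurable_fun setT (fun y : (R * T) * V => w y.1.2).
  exact: (measurableT_comp mw (measurableT_comp measurable_snd measurable_fst)).
apply: mposE; apply: mdiv => //.
apply: measurable_funD; last exact: m221.
apply: measurable_funD => //.
exact: (measurableT_comp measurable_fst measurable_fst).
Qed.

Lemma PhiL0 y : (0 <= PhiL y)%E. Proof. by rewrite lee_fin pos_ge0. Qed.
Lemma PhiK0 y : (0 <= PhiK y)%E. Proof. by rewrite lee_fin pos_ge0. Qed.

Lemma mPhiA : measurable_fun setT PhiA.
Proof.
apply: emeasurable_funM; last exact: mPhiK.
apply/measurable_EFinP.
exact: (measurableT_comp mg (measurableT_comp measurable_fst (measurableT_comp measurable_snd measurable_fst))).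
Qed.
Lemma PhiA0 y : (0 <= PhiA y)%E.
Proof. by apply: mule_ge0; [rewrite lee_fin|exact: PhiK0]. Qed.

Lemma mPhiB : measurable_fun setT PhiB.
Proof.
apply: (measurableT_comp mPhiL); apply: measurable_fun_pair => //.
apply: measurable_funD; first exact: (measurableT_comp measurable_fst measurable_fst).
exact: (measurableT_comp mw (measurableT_comp measurable_snd measurable_fst)).
Qed.
Lemma PhiB0 y : (0 <= PhiB y)%E. Proof. exact: PhiL0. Qed.

Lemma mPhiQ : measurable_fun setT PhiQ.
Proof.
apply: (measurableT_comp mPhiK); apply: measurable_fun_pair => //.
apply: measurable_fun_pair.
  apply: measurable_funD; first exact: (measurableT_comp measurable_fst measurable_fst).
  exact: (measurableT_comp mw (measurableT_comp measurable_fst (measurableT_comp measurable_snd measurable_fst))).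
exact: (measurableT_comp measurable_snd (measurableT_comp measurable_snd measurable_fst)).
Qed.
Lemma PhiQ0 y : (0 <= PhiQ y)%E. Proof. exact: PhiK0. Qed.

Local Open Scope ereal_scope.

Lemma claim n : forall c, (0 <= c)%R ->
  iid n (Fz PhiL c) =
  (n%:R)%:E * draw (fun u => (g u.1)%:E * iid n.-1 (Fz PhiK (c, u))).
Proof.
elim: n => [|n IH] c c0.
  by rewrite mul0e /= /Fz /PhiL /= hsel0 mul0r posE.
rewrite iidS_Fz.
pose G := fun tu : T * T => (g tu.2.1)%:E * iid n.-1 (Fz PhiQ (c, tu)).
have mG : measurable_fun setT G.
  apply: emeasurable_funM.
    apply/measurable_EFinP.
    exact: (measurableT_comp mg (measurableT_comp measurable_fst measurable_snd)).
  exact: (measurableT_comp (iid_meas n.-1 mPhiQ PhiQ0) (pair1_measurable c)).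
have G0 : forall y, 0 <= G y.
  by move=> y; apply: mule_ge0; [rewrite lee_fin|apply: iid_ge0 => s; exact: PhiQ0].
pose AA := fun t : T => (g t.1)%:E * iid n (Fz PhiK (c, t)).
have mAA : measurable_fun setT AA.
  apply: emeasurable_funM.
    by apply/measurable_EFinP; exact: (measurableT_comp mg measurable_fst).
  exact: (measurableT_comp (iid_meas n mPhiK PhiK0) (pair1_measurable c)).
have AA0 : forall t, 0 <= AA t.
  by move=> t; apply: mule_ge0; [rewrite lee_fin|apply: iid_ge0 => s; exact: PhiK0].
pose BB := fun t : T => (n%:R)%:E * draw (fun u => G (t, u)).
have E1 : (fun t => iid n (Fz (shiftP PhiL) (c, t))) = (fun t => AA t + BB t).
  apply/funext => t.
  have -> : Fz (shiftP PhiL) (c, t) = (fun s => Fz PhiA (c, t) s + Fz PhiB (c, t) s).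
    apply/funext => s; rewrite /Fz /shiftP /PhiA /PhiB /PhiK /PhiL /=.
    rewrite hsel.
    have S0 : (0 <= \sum_(u <- s) w u)%R := sums21_ge0 s.
    set S := (\sum_(u <- s) w u)%R.
    have sl0 := hselge0 s; have wt := w_gt0 t.
    have gt := g0 t.1; have wg : (0 <= w t * g t.1)%R by apply: mulr_ge0 => //; exact: ltW.
    have h1 : (0 <= (w t * g t.1 + sel (sums s)) / (c + (w t + S)))%R.
      by apply: divr_ge0; [exact: addr_ge0|apply: addr_ge0 => //; apply: addr_ge0 => //; exact: ltW].
    have wt' := ltW wt.
    have h2 : (0 <= w t / (c + w t + S))%R by apply: divr_ge0 => //; do 2 apply: addr_ge0 => //.
    have h3 : (0 <= sel (sums s) / (c + w t + S))%R by apply: divr_ge0 => //; do 2 apply: addr_ge0 => //.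
    rewrite (posE _ h1) (posE _ h2) (posE _ h3) -EFinM -EFinD; congr (_%:E).
    by rewrite addrA mulrDl mulrA [(g t.1 * w t)%R]mulrC.
  rewrite iid_add; [|exact: mPhiA|exact: PhiA0|exact: mPhiB|exact: PhiB0].
  congr (_ + _).
    exact: (iid_scale n _ _ _ mPhiK PhiK0 (g t.1) (c, t) (g0 t.1)).
  have -> : iid n (Fz PhiB (c, t)) = iid n (Fz PhiL (c + w t)%R) by [].
  rewrite IH //; have := w_gt0 t; lra.
rewrite E1 draw_add //; last first.
  move=> t; apply: mule_ge0; first by rewrite lee_fin.
  by apply: draw_ge0.
  apply: measurable_funeM; exact: (@draw_meas _ _ G mG G0).
rewrite /BB draw_scale //; last 2 first.
  exact: (@draw_meas _ _ G mG G0).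
  by move=> t; exact: draw_ge0.
rewrite (draw_swap G mG G0).
case: n IH @G mG G0 @AA mAA AA0 @BB E1 => [|m] IH G mG G0 AA mAA AA0 BB E1.
  by rewrite mul0e adde0 mulr1n mul1e.
have E3 : (fun u => draw (fun t => G (t, u))) = AA.
  apply/funext => u; rewrite /G /AA /=.
  rewrite (draw_scale (g u.1) (fun t => iid m (Fz PhiQ (c, (t, u)))) (g0 u.1)); last 2 first.
  - have mt : measurable_fun setT (fun t : T => (c, (t, u))).
      by apply: measurable_fun_pair => //; exact: pair2_measurable.
    exact: (measurableT_comp (iid_meas m mPhiQ PhiQ0) mt).
  - by move=> t; apply: iid_ge0 => s; exact: PhiQ0.
  congr (_ * draw _); apply/funext => t.
  congr (iid m _); apply/funext => s.
  rewrite /Fz /PhiQ /PhiK sums_cons /=; congr (pos (_ / _))%:E; lra.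
rewrite E3 [in RHS]mulrS EFinD ge0_muleDl ?mul1e //.
Qed.

End Claim.

Local Open Scope ereal_scope.

Hypothesis p1 : \int[pi]_x (p x)%:E = 1.
Hypothesis fint : \int[pi]_x (`|f x| * p x)%:E < +oo.

Definition I := fine (\int[pi]_x (`|f x| * p x)%:E).

Lemma fpint_ge0 : 0 <= \int[pi]_x (`|f x| * p x)%:E.
Proof. by apply: integral_ge0 => x _; rewrite lee_fin mulr_ge0. Qed.

Lemma IE : I%:E = \int[pi]_x (`|f x| * p x)%:E.
Proof. by rewrite /I fineK // ge0_fin_numE // fpint_ge0. Qed.

Lemma I_ge0 : (0 <= I)%R.
Proof. by rewrite -lee_fin IE fpint_ge0. Qed.

Lemma mabsf : measurable_fun setT (fun x => `|f x|)%R.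
Proof. exact: measurableT_comp. Qed.

Lemma draw_aff (a : R) : (0 <= a)%R ->
  draw (fun t => (a + `|f t.1|)%R%:E) = (a + I)%R%:E.
Proof.
move=> a0; rewrite /draw_int.
have E : forall x : X, (p x)%:E * \int[P]_w (a + `|f x|)%R%:E =
    (a * p x)%R%:E + (`|f x| * p x)%R%:E.
  move=> x; rewrite integral_cst // [X in _ * (_ * X)](probability_setT P) mule1 -EFinM -EFinD.
  by congr (_%:E); rewrite mulrDr mulrC [(p x * _)%R]mulrC.
under eq_integral do rewrite E.
rewrite ge0_integralD //; last 4 first.
- by move=> x _; rewrite lee_fin mulr_ge0.
- by apply/measurable_EFinP; apply: measurable_funM => //.
- by move=> x _; rewrite lee_fin mulr_ge0.
- by apply/measurable_EFinP; apply: measurable_funM => //; exact: mabsf.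
rewrite -IE.
under eq_integral do rewrite EFinM.
rewrite ge0_integralZl_EFin //.
- by rewrite p1 mule1.
- by move=> x _; rewrite lee_fin.
- exact/measurable_EFinP.
Qed.

Lemma iid_bnd n : forall d (Z : measurableType d) (Phi : Z * V -> \bar R) (cb : Z -> R),
  measurable_fun setT Phi -> (forall y, 0 <= Phi y) -> (forall z, (0 <= cb z)%R) ->
  (forall z s, Fz Phi z s <= (cb z + \sum_(u <- s) `|f u.1|)%R%:E) -> forall z,
  iid n (Fz Phi z) <= (cb z + n%:R * I)%R%:E.
Proof.
elim: n => [|n IH] d Z Phi cb mP P0 cb0 hb z.
  by have := hb z [::]; rewrite big_nil mul0r.
rewrite iidS_Fz.
apply: (@le_trans _ _ (draw (fun t => ((cb z + n%:R * I) + `|f t.1|)%R%:E))).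
  apply: draw_mono.
  - exact: iid_measT.
  - by move=> t; apply: iid_ge0 => s; exact: P0.
  - apply/measurable_EFinP; apply: measurable_funD => //.
    exact: (measurableT_comp mabsf measurable_fst).
  - move=> t.
    have := IH _ _ (shiftP Phi) (fun zt => cb zt.1 + `|f zt.2.1|)%R (mshiftP mP)
      (fun y => P0 _) (fun zt => addr_ge0 (cb0 zt.1) (normr_ge0 _)).
    have hb' : forall (zt : Z * T) s, Fz (shiftP Phi) zt s <=
        ((cb zt.1 + `|f zt.2.1|) + \sum_(u <- s) `|f u.1|)%R%:E.
      move=> [z' t'] s; rewrite /Fz /shiftP /= -sums_cons.
      by apply: le_trans (hb z' (t' :: s)) _; rewrite big_cons lee_fin /=; lra.
    move=> /(_ hb' (z, t)) /le_trans; apply.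
    by rewrite lee_fin /=; lra.
rewrite draw_aff; last by apply: addr_ge0 => //; apply: mulr_ge0 => //; exact: I_ge0.
by rewrite lee_fin mulrS; lra.
Qed.

Lemma draw_in_meas (A : T -> \bar R) : measurable_fun setT A -> (forall t, 0 <= A t) ->
  measurable_fun setT (fun x => (p x)%:E * \int[P]_w A (x, w)).
Proof.
move=> mA A0; apply: emeasurable_funM; first exact/measurable_EFinP.
exact: (measurable_fun_fubini_tonelli_F A mA A0).
Qed.

Lemma draw_sub (A B : T -> \bar R) (k : R) : (0 <= k)%R ->
  measurable_fun setT A -> (forall t, 0 <= A t) ->
  measurable_fun setT B -> (forall t, 0 <= B t) ->
  (forall t, A t <= (k + `|f t.1|)%R%:E) -> (forall t, B t <= (k + `|f t.1|)%R%:E) ->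
  draw (fun t => A t - B t) = draw A - draw B.
Proof.
move=> k0 mA A0 mB B0 Ak Bk.
have kf0 : forall x, (0 <= k + `|f x|)%R by move=> x; apply: addr_ge0.
have mbd : measurable_fun setT (fun t : T => (k + `|f t.1|)%R%:E).
  apply/measurable_EFinP; apply: measurable_funD => //.
  exact: (measurableT_comp mabsf measurable_fst).
have inner : forall (C : T -> \bar R), measurable_fun setT C -> (forall t, 0 <= C t) ->
    (forall t, C t <= (k + `|f t.1|)%R%:E) -> forall x,
    P.-integrable setT (fun w => C (x, w)) /\
    \int[P]_w C (x, w) \is a fin_num.
  move=> C mC C0 Ck x.
  have mCx : measurable_fun setT (fun w => C (x, w)).
    exact: (measurableT_comp mC (pair1_measurable x)).
  have le1 : \int[P]_w C (x, w) <= (k + `|f x|)%R%:E.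
    have h : \int[P]_w (k + `|f x|)%R%:E = (k + `|f x|)%R%:E.
      by rewrite integral_cst // [X in _ * X](probability_setT P) mule1.
    rewrite -[X in _ <= X]h; apply: ge0_le_integral => //.
  have i0 : 0 <= \int[P]_w C (x, w) by apply: integral_ge0 => w _; exact: C0.
  split.
    apply/integrableP; split => //.
    under eq_integral do rewrite gee0_abs //.
    exact: le_lt_trans le1 (ltry _).
  by rewrite ge0_fin_numE //; exact: le_lt_trans le1 (ltry _).
have outer : forall (C : T -> \bar R), measurable_fun setT C -> (forall t, 0 <= C t) ->
    (forall t, C t <= (k + `|f t.1|)%R%:E) ->
    pi.-integrable setT (fun x => (p x)%:E * \int[P]_w C (x, w)).
  move=> C mC C0 Ck.
  apply/integrableP; split; first exact: draw_in_meas.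
  rewrite (eq_integral (fun x => (p x)%:E * \int[P]_w C (x, w))); last first.
    move=> x _; rewrite gee0_abs //.
    by apply: mule_ge0; [rewrite lee_fin|apply: integral_ge0 => w _; exact: C0].
  apply: (@le_lt_trans _ _ (draw (fun t => (k + `|f t.1|)%R%:E))).
    exact: draw_mono.
  by rewrite draw_aff // ltry.
rewrite /draw_int.
have -> : (fun x => (p x)%:E * \int[P]_w (A (x, w) - B (x, w))) =
    ((fun x => (p x)%:E * \int[P]_w A (x, w)) \- (fun x => (p x)%:E * \int[P]_w B (x, w))).
  apply/funext => x /=.
  have [iA fA] := inner A mA A0 Ak x.
  have [iB fB] := inner B mB B0 Bk x.
  have -> : \int[P]_w (A (x, w) - B (x, w)) = \int[P]_w A (x, w) - \int[P]_w B (x, w).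
    exact: (integralB measurableT iA iB).
  by rewrite muleBr // fin_num_adde_defr // fin_numN.
exact: (integralB measurableT (outer A mA A0 Ak) (outer B mB B0 Bk)).
Qed.

Lemma shift_bound d (Z : measurableType d) (Phi : Z * V -> \bar R) (cb : Z -> R) :
  (forall z s, Fz Phi z s <= (cb z + \sum_(u <- s) `|f u.1|)%R%:E) ->
  forall (zt : Z * T) s, Fz (shiftP Phi) zt s <=
    ((cb zt.1 + `|f zt.2.1|) + \sum_(u <- s) `|f u.1|)%R%:E.
Proof.
move=> hb [z' t'] s; rewrite /Fz /shiftP /= -sums_cons.
by apply: le_trans (hb z' (t' :: s)) _; rewrite big_cons lee_fin /=; lra.
Qed.

Arguments shift_bound {d Z Phi cb}.
Arguments iid_bnd n {d Z Phi cb}.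

Lemma iid_sub n : forall d (Z : measurableType d) (Phi1 Phi2 : Z * V -> \bar R) (cb : Z -> R),
  measurable_fun setT Phi1 -> (forall y, 0 <= Phi1 y) ->
  measurable_fun setT Phi2 -> (forall y, 0 <= Phi2 y) -> (forall z, (0 <= cb z)%R) ->
  (forall z s, Fz Phi1 z s <= (cb z + \sum_(u <- s) `|f u.1|)%R%:E) ->
  (forall z s, Fz Phi2 z s <= (cb z + \sum_(u <- s) `|f u.1|)%R%:E) -> forall z,
  iid n (fun s => Fz Phi1 z s - Fz Phi2 z s) = iid n (Fz Phi1 z) - iid n (Fz Phi2 z).
Proof.
elim: n => [|n IH] d Z Phi1 Phi2 cb m1 P1 m2 P2 cb0 hb1 hb2 z; first by [].
have cb0' : forall zt : Z * T, (0 <= cb zt.1 + `|f zt.2.1|)%R.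
  by move=> zt; apply: addr_ge0.
have P1' : forall y, 0 <= shiftP Phi1 y by move=> y; exact: P1.
have P2' : forall y, 0 <= shiftP Phi2 y by move=> y; exact: P2.
rewrite iidS !iidS_Fz.
have -> : (fun t => iid n (fun s => Fz Phi1 z (t :: s) - Fz Phi2 z (t :: s))) =
    (fun t => iid n (Fz (shiftP Phi1) (z, t)) - iid n (Fz (shiftP Phi2) (z, t))).
  apply/funext => t.
  rewrite -(IH _ _ _ _ (fun zt => cb zt.1 + `|f zt.2.1|)%R (mshiftP m1) P1' (mshiftP m2) P2' cb0'
    (shift_bound hb1) (shift_bound hb2)).
  by congr (iid n _); apply/funext => s; rewrite /Fz /shiftP sums_cons.
have kb : forall (Phi : Z * V -> \bar R), measurable_fun setT Phi -> (forall y, 0 <= Phi y) ->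
    (forall z s, Fz Phi z s <= (cb z + \sum_(u <- s) `|f u.1|)%R%:E) -> forall t,
    iid n (Fz (shiftP Phi) (z, t)) <= ((cb z + n%:R * I) + `|f t.1|)%R%:E.
  move=> Phi mP P0 hb t.
  have P0' : forall y, 0 <= shiftP Phi y by move=> y; exact: P0.
  apply: le_trans (iid_bnd n (mshiftP mP) P0' cb0' (shift_bound hb) (z, t)) _.
  by rewrite lee_fin /=; lra.
apply: (@draw_sub _ _ (cb z + n%:R * I)%R).
- by apply: addr_ge0 => //; apply: mulr_ge0 => //; exact: I_ge0.
- exact: iid_measT.
- by move=> t; apply: iid_ge0 => s; exact: P1.
- exact: iid_measT.
- by move=> t; apply: iid_ge0 => s; exact: P2.
- exact: kb.
- exact: kb.
Qed.

Lemma iid_const n : iid n (fun _ => 1) = 1.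
Proof.
elim: n => [|n IH] //.
transitivity (draw (fun _ => 1)).
  by rewrite iidS; congr draw; apply/funext => t; exact: IH.
rewrite /draw_int.
have h : \int[P]_w (1 : \bar R) = 1.
  by rewrite integral_cst // [X in _ * X](probability_setT P) mule1.
by under eq_integral do rewrite h mule1.
Qed.

Lemma wsum_le (a : T -> R) (s : seq T) : (forall t, 0 <= a t)%R ->
  ((\sum_(u <- s) w u * a u) / (\sum_(u <- s) w u) <= \sum_(u <- s) a u)%R.
Proof.
move=> a0.
have key : forall M, (\sum_(u <- s) w u <= M ->
    \sum_(u <- s) w u * a u <= M * \sum_(u <- s) a u)%R.
  elim: s => [|t s IHs] M; first by rewrite !big_nil mulr0.
  rewrite !big_cons => hM.
  have S0 : (0 <= \sum_(u <- s) w u)%R by apply: sumr_ge0 => u _; exact/ltW/w_gt0.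
  have wt := w_gt0 t.
  rewrite mulrDr; apply: lerD.
    have at0 := a0 t; nra.
  by apply: IHs; lra.
have S0 : (0 <= \sum_(u <- s) w u)%R by apply: sumr_ge0 => u _; exact/ltW/w_gt0.
have A0 : (0 <= \sum_(u <- s) a u)%R by apply: sumr_ge0.
case: (eqVneq (\sum_(u <- s) w u)%R 0%R) => [->|Sn0]; first by rewrite invr0 mulr0.
have Sp : (0 < \sum_(u <- s) w u)%R by rewrite lt_def Sn0 S0.
rewrite ler_pdivrMr // mulrC; exact: key.
Qed.

Lemma f_split x : f x = (fp x - fm x)%R.
Proof.
rewrite /fp /fm; case: (boolP (0 <= f x)%R) => h.
  by rewrite (max_l h) max_r ?subr0 // oppr_le0.
have h' : (f x <= 0)%R by rewrite leNgt; apply/negP => /ltW; apply/negP.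
by rewrite (max_r h') max_l ?sub0r ?opprK // oppr_ge0.
Qed.

Lemma fp_le x : (fp x <= `|f x|)%R.
Proof. by rewrite /fp ge_max normr_ge0 ler_norm. Qed.
Lemma fm_le x : (fm x <= `|f x|)%R.
Proof. by rewrite /fm ge_max normr_ge0 -normrN ler_norm. Qed.

Definition Psi1 (y : R * V) : \bar R := (pos (y.2.1.1 / y.2.2.1))%:E.
Definition Psi2 (y : R * V) : \bar R := (pos (y.2.1.2 / y.2.2.1))%:E.

Lemma mPsi1 : measurable_fun setT Psi1.
Proof.
apply: mposE; apply: mdiv; last exact: m221.
exact: (measurableT_comp measurable_fst (measurableT_comp measurable_fst measurable_snd)).
Qed.
Lemma mPsi2 : measurable_fun setT Psi2.
Proof.
apply: mposE; apply: mdiv; last exact: m221.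
exact: (measurableT_comp measurable_snd (measurableT_comp measurable_fst measurable_snd)).
Qed.
Lemma Psi10 y : 0 <= Psi1 y. Proof. by rewrite lee_fin pos_ge0. Qed.
Lemma Psi20 y : 0 <= Psi2 y. Proof. by rewrite lee_fin pos_ge0. Qed.

Lemma hbPsi1 (z : R) s : Fz Psi1 z s <= (0 + \sum_(u <- s) `|f u.1|)%R%:E.
Proof.
rewrite /Fz /Psi1 /= posE; last by apply: divr_ge0; [exact: sums11_ge0|exact: sums21_ge0].
rewrite lee_fin add0r; apply: le_trans (wsum_le (fun u => fp u.1) s (fun u => fp_ge0 u.1)) _.
by apply: ler_sum => u _; exact: fp_le.
Qed.
Lemma hbPsi2 (z : R) s : Fz Psi2 z s <= (0 + \sum_(u <- s) `|f u.1|)%R%:E.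
Proof.
rewrite /Fz /Psi2 /= posE; last by apply: divr_ge0; [exact: sums12_ge0|exact: sums21_ge0].
rewrite lee_fin add0r; apply: le_trans (wsum_le (fun u => fm u.1) s (fun u => fm_ge0 u.1)) _.
by apply: ler_sum => u _; exact: fm_le.
Qed.

Lemma cond_split s : (curated_cond r eps f s)%:E = Fz Psi1 0%R s - Fz Psi2 0%R s.
Proof.
rewrite /Fz /Psi1 /Psi2 /= !posE; last 2 first.
- by apply: divr_ge0; [exact: sums12_ge0|exact: sums21_ge0].
- by apply: divr_ge0; [exact: sums11_ge0|exact: sums21_ge0].
rewrite -EFinB; congr (_%:E); rewrite /curated_cond -mulrBl /sums /gam /=.
rewrite -sumrB mulr_suml; apply: eq_bigr => t _.
by rewrite f_split; ring.
Qed.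

Variable K : nat.

Definition Jt (t : T) := iid K.-1 (Fz PhiK (0%R, t)).

Lemma mJt : measurable_fun setT Jt.
Proof. rewrite /Jt; exact: (measurableT_comp (iid_meas K.-1 mPhiK PhiK0) (pair1_measurable (0%R : R))). Qed.

Lemma Jt0 t : 0 <= Jt t.
Proof. by apply: iid_ge0 => s; exact: PhiK0. Qed.

Lemma Jt1 t : Jt t <= 1.
Proof.
have mA : measurable_fun setT (fun y : T * V => PhiK ((0%R, y.1), y.2)).
  apply: (measurableT_comp mPhiK); apply: measurable_fun_pair => //.
  exact: (measurable_fun_pair (measurable_cst _) measurable_fst).
have hle : forall (t : T) s, Fz (fun y : T * V => PhiK ((0%R, y.1), y.2)) t s <=
    Fz (fun _ : T * V => 1) t s.
  move=> t' s; rewrite /Fz /PhiK /=.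
  have wt := w_gt0 t'; have S0 := sums21_ge0 s.
  have S0' : (0 <= \sum_(u <- s) w u)%R := S0.
  rewrite posE; last by apply: divr_ge0; lra.
  by rewrite lee_fin ler_pdivrMr ?mul1r; lra.
have h := iid_mono K.-1 _ _ _ _ mA (fun y => PhiK0 _) (measurable_cst _) (fun _ => lee01) hle t.
apply: le_trans h _.
by rewrite -[X in _ <= X](iid_const K.-1).
Qed.

Lemma intJ x : \int[P]_w Jt (x, w) <= 1.
Proof.
have h : \int[P]_w (1 : \bar R) = 1.
  by rewrite integral_cst // [X in _ * X](probability_setT P) mule1.
rewrite -[X in _ <= X]h; apply: ge0_le_integral => //.
- by move=> w _; exact: Jt0.
- exact: (measurableT_comp mJt (pair1_measurable x)).
- by move=> w _; exact: Jt1.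
Qed.

Lemma intJ0 x : 0 <= \int[P]_w Jt (x, w).
Proof. by apply: integral_ge0 => w _; exact: Jt0. Qed.

Lemma kernelE x : choice_kernel pi P p r eps K x = (K%:R)%:E * \int[P]_w Jt (x, w).
Proof.
rewrite /choice_kernel -ge0_integralZl_EFin //; last 2 first.
- by move=> w _; exact: Jt0.
- exact: (measurableT_comp mJt (pair1_measurable x)).
apply: eq_integral => o _.
rewrite /Jt -(iid_scale K.-1 _ _ _ mPhiK PhiK0 K%:R (0%R, (x, o)) (ler0n _ _)).
congr (iid _ _); apply/funext => s; rewrite /Fz /PhiK /=.
have wt := w_gt0 (x, o); have S0 := sums21_ge0 s.
have S0' : (0 <= \sum_(u <- s) w u)%R := S0.
rewrite posE; last by apply: divr_ge0; lra.
rewrite -EFinM; congr (_%:E).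
by rewrite /sums /gam /pl_weight /= add0r mulrA.
Qed.

Lemma rhs_g (g : X -> R) : measurable_fun setT g -> (forall x, 0 <= g x)%R ->
  (K%:R)%:E * draw (fun u => (g u.1)%:E * Jt u) =
  \int[pi]_x ((g x * p x)%:E * ((K%:R)%:E * \int[P]_w Jt (x, w))).
Proof.
move=> mg g0; rewrite /draw_int.
have E : forall x, \int[P]_w ((g (x, w).1)%:E * Jt (x, w)) = (g x)%:E * \int[P]_w Jt (x, w).
  move=> x /=; rewrite ge0_integralZl_EFin //.
  - by move=> w _; exact: Jt0.
  - exact: (measurableT_comp mJt (pair1_measurable x)).
under eq_integral do rewrite E.
rewrite -ge0_integralZl_EFin //; last 2 first.
- by move=> x _; apply: mule_ge0; [rewrite lee_fin|apply: mule_ge0; [rewrite lee_fin|exact: intJ0]].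
- apply: emeasurable_funM; first exact/measurable_EFinP.
  apply: emeasurable_funM; first exact/measurable_EFinP.
  exact: (measurable_fun_fubini_tonelli_F Jt mJt Jt0).
apply: eq_integral => x _.
rewrite !muleA -!EFinM; congr (_%:E * _); ring.
Qed.

Lemma mH : measurable_fun setT (fun x => (K%:R)%:E * \int[P]_w Jt (x, w)).
Proof.
apply: measurable_funeM.
exact: (measurable_fun_fubini_tonelli_F Jt mJt Jt0).
Qed.

Lemma int_g (g : X -> R) : measurable_fun setT g -> (forall x, 0 <= g x <= `|f x|)%R ->
  pi.-integrable setT (fun x => (g x * p x)%:E * ((K%:R)%:E * \int[P]_w Jt (x, w))).
Proof.
move=> mg g0.
have iF0 : pi.-integrable setT (fun x => (`|f x| * p x)%:E).
  apply/integrableP; split.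
    by apply/measurable_EFinP; apply: measurable_funM => //; exact: mabsf.
  rewrite (eq_integral (fun x => (`|f x| * p x)%:E)) //.
  by move=> x _; rewrite gee0_abs // lee_fin mulr_ge0.
have iF := integrableZl measurableT K%:R iF0.
apply: (le_integrable measurableT _ _ iF).
  apply: emeasurable_funM; last exact: mH.
  by apply/measurable_EFinP; apply: measurable_funM.
move=> x _.
have /andP[g1 g2] := g0 x.
have H0 : 0 <= (K%:R)%:E * \int[P]_w Jt (x, w) by apply: mule_ge0; [rewrite lee_fin|exact: intJ0].
rewrite gee0_abs; last by apply: mule_ge0 => //; rewrite lee_fin mulr_ge0.
rewrite gee0_abs; last by apply: mule_ge0; rewrite lee_fin ?mulr_ge0.
rewrite muleC; apply: lee_pmul => //.
- by rewrite lee_fin mulr_ge0.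
- rewrite -[X in _ <= X]mule1; apply: lee_wpmul2l; [by rewrite lee_fin|exact: intJ].
- by rewrite lee_fin; apply: ler_wpM2r.
Qed.

Lemma main_f : curated_expect pi P p r eps K f =
  \int[pi]_x ((f x * p x)%:E * choice_kernel pi P p r eps K x).
Proof.
rewrite /curated_expect.
have -> : (fun s => (curated_cond r eps f s)%:E) = (fun s => Fz Psi1 0%R s - Fz Psi2 0%R s).
  by apply/funext => s; exact: cond_split.
rewrite (iid_sub K _ _ Psi1 Psi2 (fun _ => 0%R) mPsi1 Psi10 mPsi2 Psi20 (fun _ => lexx 0%R)
  hbPsi1 hbPsi2 0%R).
have m11 : measurable_fun setT (fun v : V => v.1.1).
  exact: (measurableT_comp measurable_fst measurable_fst).
have m12 : measurable_fun setT (fun v : V => v.1.2).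
  exact: (measurableT_comp measurable_snd measurable_fst).
have C1 : iid K (Fz Psi1 0%R) = (K%:R)%:E * draw (fun u => (fp u.1)%:E * Jt u).
  have -> : Fz Psi1 0%R = Fz (PhiL (fun v : V => v.1.1)) 0%R.
    by apply/funext => s; rewrite /Fz /Psi1 /PhiL /= add0r.
  have h0 : (sums [::]).1.1 = 0%R by rewrite /sums big_nil.
  exact: (claim fp (fun v : V => v.1.1) mfp fp_ge0 m11 (fun t v => erefl) h0 sums11_ge0 K 0%R (lexx 0%R)).
have C2 : iid K (Fz Psi2 0%R) = (K%:R)%:E * draw (fun u => (fm u.1)%:E * Jt u).
  have -> : Fz Psi2 0%R = Fz (PhiL (fun v : V => v.1.2)) 0%R.
    by apply/funext => s; rewrite /Fz /Psi2 /PhiL /= add0r.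
  have h0 : (sums [::]).1.2 = 0%R by exact: big_nil.
  exact: (claim fm (fun v : V => v.1.2) mfm fm_ge0 m12 (fun t v => erefl) h0 sums12_ge0 K 0%R (lexx 0%R)).
rewrite C1 C2.
have E1 := rhs_g fp mfp fp_ge0.
have E2 := rhs_g fm mfm fm_ge0.
apply: (etrans (congr2 (fun a b => a - b) E1 E2)) => /=.
have hfp : forall x, (0 <= fp x <= `|f x|)%R by move=> x; rewrite fp_ge0 fp_le.
have hfm : forall x, (0 <= fm x <= `|f x|)%R by move=> x; rewrite fm_ge0 fm_le.
rewrite -(integralB measurableT (int_g fp mfp hfp) (int_g fm mfm hfm)).
apply: eq_integral => x _; rewrite kernelE /=.
have Hf : (K%:R)%:E * \int[P]_w Jt (x, w) \is a fin_num.
  rewrite fin_numM //; rewrite ge0_fin_numE ?intJ0 //.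
  exact: le_lt_trans (intJ x) (ltry _).
by rewrite -muleBl // -EFinB f_split mulrBl.
Qed.

End S.

Theorem lemma1 (R : realType) (dX dO : measure_display)
  (X : measurableType dX) (Omega : measurableType dO)
  (pi : {measure set X -> \bar R}) (P : probability Omega R)
  (r : X -> R) (eps : Omega -> X -> R) (K : nat) (p : X -> R) :
  sigma_finite setT pi ->
  measurable_fun setT r ->
  measurable_fun setT (fun z : Omega * X => eps z.1 z.2) ->
  (2 <= K)%N ->
  measurable_fun setT p ->
  (forall x, 0 <= p x) ->
  (\int[pi]_x (p x)%:E = 1)%E ->
  (forall f : X -> R, measurable_fun setT f ->
     (\int[pi]_x (`|f x| * p x)%:E < +oo)%E ->
     curated_expect pi P p r eps K f =
     (\int[pi]_x ((f x * p x)%:E * choice_kernel pi P p r eps K x))%E)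
  /\
  (forall A : set X, measurable A ->
     curated_expect pi P p r eps K (\1_A) =
     (\int[pi]_(x in A) ((p x)%:E * choice_kernel pi P p r eps K x))%E).
Proof.
move=> hpi mr meps K2 mp p0 p1.
have main : forall f : X -> R, measurable_fun setT f ->
    (\int[pi]_x (`|f x| * p x)%:E < +oo)%E ->
    curated_expect pi P p r eps K f =
    (\int[pi]_x ((f x * p x)%:E * choice_kernel pi P p r eps K x))%E.
  by move=> f mf fint; apply: main_f.
split => //.
move=> A mA.
have mI : measurable_fun setT (\1_A : X -> R) by apply/measurable_indicP.
have fint : (\int[pi]_x (`|(\1_A x : R)| * p x)%:E < +oo)%E.
  apply: (@le_lt_trans _ _ 1%E); last exact: ltry.
  rewrite -p1; apply: ge0_le_integral => //.
  - by move=> x _; rewrite lee_fin mulr_ge0.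
  - by apply/measurable_EFinP; apply: measurable_funM => //; exact: measurableT_comp.
  - exact/measurable_EFinP.
  - move=> x _; rewrite lee_fin indicE.
    by case: (x \in A); rewrite ?normr1 ?normr0 ?mul1r ?mul0r.
rewrite (main _ mI fint) [RHS]integral_mkcond; apply: eq_integral => x _.
by rewrite patchE indicE; case: (x \in A); rewrite ?mul1r ?mul0r ?mul0e.
Qed.
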